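(* Let $G$ be a finite group and let $X = \{[a,b]^k \mid a,b \in G,\ (|a|,|b|)=1,\ k \in \mathbb{Z}\}$. Assume that for all $x,y \in X$ with $(|x|,|y|)=1$ we have $|xy|=|x|\,|y|$. Let $x \in X$ and let $N$ be a subgroup of $G$ normalized by $x$. If $(|x|,|N|)=1$, then $[x,N]=1$, i.e. $x$ centralizes $N$.
   Context: All groups are finite. $|x|$ denotes the order of an element $x$ and $|N|$ the order of a subgroup $N$. $[a,b]=a^{-1}b^{-1}ab$, and $[x,N]$ is the subgroup generated by all $[x,y]$, $y\in N$. *)

(* Defs.v *)
From mathcomp Require Import all_boot all_fingroup.
Set Implicit Arguments. Unset Strict Implicit. Unset Printing Implicit Defensive.
Import GroupScope.

(* The set X = { [a,b]^k | a,b in G, gcd(|a|,|b|) = 1, k in Z } of the paper.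
   mathcomp's commutator [~ a, b] = a^-1 * b^-1 * a * b, matching the paper. *)
Definition coprime_comm_powers (gT : finGroupType) (G : {group gT}) (x : gT) : Prop :=
  exists a b : gT, [/\ a \in G, b \in G, coprime #[a] #[b] &
    exists k : nat, x = [~ a, b] ^+ k \/ x = ([~ a, b] ^+ k)^-1].

(* Main.v *)
Require Import Defs.
From mathcomp Require Import all_boot all_fingroup all_solvable.
Import GroupScope.

Theorem mainTheorem2 (gT : finGroupType) (G : {group gT})
  (hX : forall x y : gT, coprime_comm_powers G x -> coprime_comm_powers G y ->
          coprime #[x] #[y] -> #[x * y] = (#[x] * #[y])%N)
  (x : gT) (N : {group gT})
  (hx : coprime_comm_powers G x) (hNG : N \subset G) (hxN : x \in 'N(N))
  (hcop : coprime #[x] #|N|) :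
  [~: [set x], N] = 1.
Proof.
have xG : x \in G.
  case: hx => a [b [aG bG _ [k [->|->]]]].
    by rewrite groupX // groupR.
  by rewrite groupV groupX // groupR.
apply/commG1P; rewrite sub1set; apply/centP => n nN.
have nG : n \in G by apply: (subsetP hNG).
set c := [~ x, n].
have cN : c \in N by rewrite /c commgEr groupM // memJ_norm // groupV.
have hc : coprime_comm_powers G c.
  exists x, n; split => //.
    exact: coprime_dvdr (order_dvdG nN) hcop.
  by exists 1%N; left; rewrite expg1.
have := hX x c hx hc (coprime_dvdr (order_dvdG cN) hcop).
rewrite {1}/c commgEl mulKVg orderJ => H.
have c1 : #[c] = 1%N.
  have p : (0 < #[x])%N := order_gt0 x.
  apply/eqP; rewrite -(eqn_pmul2l p) muln1 -H //.
move/eqP: c1; rewrite order_eq1 => /commgP Hc.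
by apply: esym.
Qed.
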